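(* Let $G$ be a finite group and $H \leqslant G$ a Hall subgroup (i.e. $\gcd(|H|, |G:H|)=1$). If $H$ is exponential in $G$, then $H \lhd G$.
   Context: A subgroup $H$ of finite index in a group $G$ is called exponential in $G$ if $x^{|G:H|} \in H$ for every $x \in G$. *)

(* Defs.v *)
From mathcomp Require Import all_boot all_fingroup all_solvable.
Set Implicit Arguments. Unset Strict Implicit. Unset Printing Implicit Defensive.
Local Open Scope group_scope.

Definition exponential_in (gT : finGroupType) (G H : {set gT}) : Prop :=
  forall x, x \in G -> x ^+ #|G : H| \in H.

(* Main.v *)
Require Import Defs.
From mathcomp Require Import all_boot all_fingroup all_solvable.
Local Open Scope group_scope.

Theorem corollary4p4 (gT : finGroupType) (G H : {group gT}) :
  Hall G H -> exponential_in G H -> H <| G.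
Proof.
move=> /andP[sHG coHn] hexp.
have key : forall x, x \in G -> coprime #[x] #|G : H| -> x \in H.
  move=> x Gx cox.
  have /eqP gen : generator <[x]> (x ^+ #|G : H|) by rewrite generator_coprime.
  by rewrite -cycle_subG gen cycle_subG; exact: hexp.
rewrite /normal sHG /=; apply/normsP => g Gg.
apply/eqP; rewrite eqEcard cardJg leqnn andbT.
apply/subsetP => y /imsetP [h Hh ->].
apply: key; first by rewrite groupJ // (subsetP sHG).
rewrite orderJ; apply: coprime_dvdl coHn; exact: order_dvdG.
Qed.
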